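(* Let $\varepsilon\in(0,1)$ and let $\tau,\alpha,f_0,g$ be as defined in the context. For every $x\in\{0,1\}^n$ with $f(x)\ge f_0$, \[E[g(\mathcal{M}(x))]\le\frac{1}{e}(1+\varepsilon)\,g(x).\]
   Context: $f$ is OneMax, $f(x)=\sum_i x_i$. $\mathcal{M}$ is standard bit mutation: $\mathcal{M}(x)$ flips each bit of $x$ independently with probability $1/n$. Potential function: $\tau=\frac{4e}{\varepsilon}$, $\alpha=1-\frac1\tau\ln\big(1+\frac1\tau\big)$ (which lies in $(\tfrac34,1)$), $f_0=\lceil\alpha n\rceil$, and $g:\{0,1\}^n\to\mathbb{R}$ is $g(x)=\tau^{f(x)-f_0}$ if $f(x)\ge f_0$ and $g(x)=0$ otherwise. *)

(* Defs.v *)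
From Stdlib Require Import Reals Lra Lia ZArith List.
Open Scope R_scope.

Fixpoint bitstrings (n : nat) : list (list bool) :=
  match n with
  | O => nil :: nil
  | S m => map (cons true) (bitstrings m) ++ map (cons false) (bitstrings m)
  end.

Definition onemax (x : list bool) : nat := count_occ Bool.bool_dec x true.

(* probability that standard bit mutation (each bit flipped independently
   with prob. 1/n) turns x into y, for x y of length n *)
Fixpoint mut_prob_aux (p : R) (x y : list bool) : R :=
  match x, y with
  | a :: x', b :: y' =>
      (if Bool.eqb a b then 1 - p else p) * mut_prob_aux p x' y'
  | _, _ => 1
  end.

Definition mut_prob (n : nat) (x y : list bool) : R := mut_prob_aux (/ INR n) x y.

Definition sumR (l : list R) : R := fold_right Rplus 0 l.

Definition expect_mut (n : nat) (h : list bool -> R) (x : list bool) : R :=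
  sumR (map (fun y => mut_prob n x y * h y) (bitstrings n)).

Definition Rceil (r : R) : Z := (- Int_part (- r))%Z.

Definition tau (eps : R) : R := 4 * exp 1 / eps.
Definition alpha (eps : R) : R := 1 - / tau eps * ln (1 + / tau eps).
Definition f0 (eps : R) (n : nat) : Z := Rceil (alpha eps * INR n).

Definition g (eps : R) (n : nat) (x : list bool) : R :=
  if Z.leb (f0 eps n) (Z.of_nat (onemax x))
  then powerRZ (tau eps) (Z.of_nat (onemax x) - f0 eps n)
  else 0.

(* Main.v *)
Require Import Defs.
From Stdlib Require Import Reals ZArith List Lra Lia.
Open Scope R_scope.

Definition zc (x : list bool) : nat := count_occ Bool.bool_dec x false.

Lemma oz_len x : (onemax x + zc x)%nat = length x.
Proof.
  induction x as [|a x IH]; [reflexivity|].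
  destruct a; unfold onemax, zc in *; simpl; lia.
Qed.

Lemma sumR_app l1 l2 : sumR (l1 ++ l2) = sumR l1 + sumR l2.
Proof. induction l1; simpl; [lra|rewrite IHl1; lra]. Qed.

Lemma sumR_scale {A} (c : R) (f : A -> R) l :
  sumR (map (fun y => c * f y) l) = c * sumR (map f l).
Proof. induction l; simpl; [lra|rewrite IHl; lra]. Qed.

Lemma sumR_le {A} (f h : A -> R) l :
  (forall y, f y <= h y) -> sumR (map f l) <= sumR (map h l).
Proof. intros H; induction l; simpl; [lra|]. specialize (H a). lra. Qed.

Lemma mpa_nonneg p x y : 0 <= p <= 1 -> 0 <= mut_prob_aux p x y.
Proof.
  intros Hp; revert y; induction x as [|a x IH]; intros [|b y]; simpl; try lra.
  apply Rmult_le_pos; [destruct (Bool.eqb a b); lra | apply IH].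
Qed.

Lemma sum_lemma p t x :
  sumR (map (fun y => mut_prob_aux p x y * t ^ onemax y) (bitstrings (length x)))
  = ((1-p)*t + p) ^ onemax x * (p*t + (1-p)) ^ zc x.
Proof.
  induction x as [|a x IH].
  - simpl. unfold onemax; simpl. lra.
  - simpl bitstrings. rewrite map_app, !map_map, sumR_app.
    rewrite (map_ext (fun x0 => mut_prob_aux p (a :: x) (true :: x0) * t ^ onemax (true :: x0))
               (fun y => ((if Bool.eqb a true then 1 - p else p) * t) *
                         (mut_prob_aux p x y * t ^ onemax y))).
    2:{ intros y. cbn [mut_prob_aux]. change (onemax (true :: y)) with (S (onemax y)). cbn [pow]. ring. }
    rewrite (map_ext (fun x0 => mut_prob_aux p (a :: x) (false :: x0) * t ^ onemax (false :: x0))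
               (fun y => (if Bool.eqb a false then 1 - p else p) *
                         (mut_prob_aux p x y * t ^ onemax y))).
    2:{ intros y. cbn [mut_prob_aux]. change (onemax (false :: y)) with (onemax y). ring. }
    rewrite !sumR_scale, IH.
    destruct a; unfold onemax, zc; simpl; fold (onemax x); fold (zc x); ring.
Qed.

Lemma exp_pow a k : exp a ^ k = exp (INR k * a).
Proof.
  induction k; simpl pow. { simpl. rewrite Rmult_0_l, exp_0. reflexivity. }
  rewrite IHk, S_INR, <- exp_plus. f_equal. ring.
Qed.

Lemma Rceil_ge r : r <= IZR (Rceil r).
Proof.
  unfold Rceil. rewrite opp_IZR. destruct (base_Int_part (- r)). lra.
Qed.

Lemma tau_facts eps : 0 < eps < 1 -> 8 / eps < tau eps.
Proof.
  intros He. unfold tau. assert (2 < exp 1).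
  { pose proof (exp_ineq1 1 ltac:(lra)). lra. }
  unfold Rdiv. apply Rmult_lt_compat_r. apply Rinv_0_lt_compat; lra. lra.
Qed.

Theorem theorem4 (eps : R) (n : nat) (x : list bool) :
  0 < eps < 1 -> (1 <= n)%nat -> length x = n ->
  (f0 eps n <= Z.of_nat (onemax x))%Z ->
  expect_mut n (g eps n) x <= / exp 1 * (1 + eps) * g eps n x.
Proof.
  intros He Hn Hl Hf.
  set (t := tau eps). set (p := / INR n).
  assert (Ht8 := tau_facts eps He). fold t in Ht8.
  assert (Htpos : 0 < t). { apply Rlt_trans with (8/eps); [|exact Ht8].
    unfold Rdiv; apply Rmult_lt_0_compat; [lra| apply Rinv_0_lt_compat; lra]. }
  assert (HnR : 1 <= INR n). { apply (le_INR 1 n) in Hn. simpl in Hn. exact Hn. }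
  assert (Hp : 0 < p <= 1). { unfold p. split. apply Rinv_0_lt_compat; lra.
    rewrite <- Rinv_1. apply Rinv_le_contravar; lra. }
  set (P := powerRZ t (- f0 eps n)).
  assert (HP : 0 < P) by (apply powerRZ_lt; exact Htpos).
  assert (Hgx : g eps n x = t ^ onemax x * P).
  { unfold g. apply Z.leb_le in Hf. rewrite Hf. fold t. unfold P.
    rewrite pow_powerRZ, <- powerRZ_add by lra. f_equal. }
  assert (Hgy : forall y, g eps n y <= t ^ onemax y * P).
  { intros y. unfold g. fold t. destruct (Z.leb (f0 eps n) (Z.of_nat (onemax y))).
    - unfold P. rewrite pow_powerRZ, <- powerRZ_add by lra. right. f_equal.
    - apply Rlt_le, Rmult_lt_0_compat; [apply pow_lt; lra | exact HP]. }
  unfold expect_mut.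
  eapply Rle_trans.
  { apply (sumR_le _ (fun y => P * (mut_prob n x y * t ^ onemax y))).
    intros y. rewrite (Rmult_comm P), Rmult_assoc.
    apply Rmult_le_compat_l. unfold mut_prob. apply mpa_nonneg. fold p; lra.
    apply Hgy. }
  rewrite sumR_scale. unfold mut_prob. fold p. rewrite <- Hl, sum_lemma, Hl.
  rewrite Hgx.
  set (k := onemax x). set (z := zc x).
  assert (Hkz : (k + z)%nat = n) by (rewrite <- Hl; apply oz_len).
  set (c := 1 - / t).
  assert (Hinvt : 0 < / t < eps / 8).
  { split. apply Rinv_0_lt_compat; lra.
    replace (eps/8) with (/ (8/eps)) by (field; lra).
    apply Rinv_lt_contravar; [|exact Ht8].
    apply Rmult_lt_0_compat; [|exact Htpos].
    unfold Rdiv; apply Rmult_lt_0_compat; [lra| apply Rinv_0_lt_compat; lra]. }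
  assert (HA : (1 - p) * t + p = t * (1 - p * c)) by (unfold c; field; lra).
  rewrite HA, Rpow_mult_distr.
  assert (Hk : alpha eps * INR n <= INR k).
  { pose proof (Rceil_ge (alpha eps * INR n)).
    apply IZR_le in Hf. rewrite <- INR_IZR_INZ in Hf. unfold f0 in Hf. fold k in Hf. lra. }
  assert (Hz : INR z <= (1 - alpha eps) * INR n).
  { rewrite <- Hkz, plus_INR in Hk |- *. nra. }
  assert (Hal : 1 - alpha eps = / t * ln (1 + / t)) by (unfold alpha; fold t; ring).
  assert (Hln0 : 0 <= ln (1 + / t)).
  { rewrite <- ln_1. apply Rlt_le, ln_increasing; lra. }
  assert (H1 : (1 - p * c) ^ k <= exp (INR k * (- (p*c)))).
  { rewrite <- exp_pow. apply pow_incr. split.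
    - unfold c. assert (p * (1 - / t) <= 1) by nra. lra.
    - pose proof (exp_ineq1_le (- (p*c))). lra. }
  assert (H2 : (p * t + (1 - p)) ^ z <= exp (INR z * (p * (t - 1)))).
  { rewrite <- exp_pow. apply pow_incr. split. nra.
    pose proof (exp_ineq1_le (p * (t-1))). lra. }
  assert (Hexp : INR k * (- (p*c)) + INR z * (p * (t - 1)) <= -1 + / t + ln (1 + / t)).
  { assert (Hpn : p * INR n = 1) by (unfold p; field; lra).
    assert (HkE : INR k = INR n - INR z) by (rewrite <- Hkz, plus_INR; ring).
    rewrite HkE.
    replace ((INR n - INR z) * - (p * c) + INR z * (p * (t - 1)))
      with (- c * (p * INR n) + p * INR z * (c + t - 1)) by ring.
    rewrite Hpn.
    assert (Hpz : p * INR z <= / t * ln (1 + / t)).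
    { rewrite <- Hal. apply Rle_trans with (p * ((1 - alpha eps) * INR n)).
      apply Rmult_le_compat_l; lra. right.
      transitivity ((1 - alpha eps) * (p * INR n)); [ring | rewrite Hpn; ring]. }
    assert (Ht1 : 1 < t).
    { apply Rlt_trans with (8/eps); [| exact Ht8]. unfold Rdiv.
      assert (1 < /eps). { rewrite <- Rinv_1. apply Rinv_lt_contravar; lra. } nra. }
    assert (Hct : 0 <= c + t - 1 <= t) by (unfold c; lra).
    assert (p * INR z * (c + t - 1) <= ln (1 + / t)).
    { assert (0 <= p * INR z) by (apply Rmult_le_pos; [lra|apply pos_INR]).
      apply Rle_trans with (/ t * ln (1 + / t) * t).
      - apply Rle_trans with (p * INR z * t). nra. nra.
      - right. field. lra. }
    assert (c = 1 - / t) by reflexivity. lra. }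
  assert (Hfin : exp (-1 + / t + ln (1 + / t)) <= / exp 1 * (1 + eps)).
  { replace (-1 + / t + ln (1 + / t)) with (- (1) + (/ t + ln (1 + / t))) by ring.
    rewrite exp_plus, exp_Ropp, exp_plus, exp_ln by lra.
    assert (Hu : exp (/ t) * (1 - / t) <= 1).
    { pose proof (exp_ineq1_le (- / t)).
      apply Rle_trans with (exp (/ t) * exp (- / t)).
      apply Rmult_le_compat_l. apply Rlt_le, exp_pos. lra.
      rewrite <- exp_plus, Rplus_opp_r, exp_0; lra. }
    assert (exp (/ t) * (1 + / t) <= 1 + eps).
    { assert (exp (/ t) <= / (1 - / t)).
      { apply (Rmult_le_reg_r (1 - / t)). lra.
        rewrite Rinv_l by lra. exact Hu. }
      apply Rle_trans with (/ (1 - / t) * (1 + / t)).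
      apply Rmult_le_compat_r; lra.
      apply (Rmult_le_reg_l (1 - / t)). lra.
      rewrite <- Rmult_assoc, Rinv_r by lra. nra. }
    pose proof (Rinv_0_lt_compat _ (exp_pos 1)).
    apply Rmult_le_compat_l; lra. }
  assert (Hprod : (1 - p * c) ^ k * (p * t + (1 - p)) ^ z <= / exp 1 * (1 + eps)).
  { eapply Rle_trans.
    apply Rmult_le_compat; [apply pow_le; unfold c; nra | apply pow_le; nra | exact H1 | exact H2].
    rewrite <- exp_plus. eapply Rle_trans; [|exact Hfin].
    destruct (Rle_lt_or_eq_dec _ _ Hexp) as [h|h]; [apply Rlt_le, exp_increasing, h | rewrite h; lra]. }
  assert (0 < t ^ k) by (apply pow_lt; lra).
  replace (P * (t ^ k * (1 - p * c) ^ k * (p * t + (1 - p)) ^ z))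
    with (P * t ^ k * ((1 - p * c) ^ k * (p * t + (1 - p)) ^ z)) by ring.
  replace (/ exp 1 * (1 + eps) * (t ^ k * P)) with (P * t ^ k * (/ exp 1 * (1 + eps))) by ring.
  apply Rmult_le_compat_l. nra. exact Hprod.
Qed.
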